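(* Let $\mathbb{X},\mathbb{Y}$ be finite-dimensional real polyhedral Banach spaces with $\dim\mathbb{X}=n$, $\dim\mathbb{Y}=m$. Let $T\in\mathbb{L}(\mathbb{X},\mathbb{Y})$ with $\|T\|=1$ be such that $M_T=F\cup(-F)$ for some face $F$ of $B_{\mathbb{X}}$ and $T(M_T)$ has exactly two elements. If $T$ is $k$-smooth, then $k\in\{pq:1\le p\le n,\ 1\le q\le m\}$.
   Context: Polyhedral: the closed unit ball has finitely many extreme points. $M_T=\{x:\|x\|=1,\|Tx\|=\|T\|\}$. For a unit vector $z$ of a normed space $\mathbb{Z}$, $J(z)=\{f\in\mathbb{Z}^*:\|f\|=1,f(z)=1\}$ and $z$ is $k$-smooth if $\dim\operatorname{span}J(z)=k$ ($T$ is viewed in $\mathbb{L}(\mathbb{X},\mathbb{Y})$ with operator norm). A convex set $F\subset S_{\mathbb{X}}$ is a face of $B_{\mathbb{X}}$ if whenever $x_1,x_2\in S_{\mathbb{X}}$ and $(1-t)x_1+tx_2\in F$ for some $0<t<1$, then $x_1,x_2\in F$. *)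

(* Defs.v *)
From HB Require Import structures.
From mathcomp Require Import all_boot all_order all_algebra.
From mathcomp Require Import boolp classical_sets cardinality reals.
Set Implicit Arguments. Unset Strict Implicit. Unset Printing Implicit Defensive.
Import Order.TTheory GRing.Theory Num.Theory.
Local Open Scope ring_scope.
Local Open Scope classical_set_scope.

(* A finite-dimensional real normed space of dimension n is modelled as
   'rV[R]_n equipped with an arbitrary norm N. Operators X -> Y are
   matrices A : 'M_(n,m) acting by x |-> x *m A. *)

Section Defs.
Variable R : realType.

Definition is_norm (n : nat) (N : 'rV[R]_n -> R) : Prop :=
  [/\ forall x, 0 <= N x,
      forall x, N x = 0 -> x = 0,
      forall (a : R) x, N (a *: x) = `|a| * N x
    & forall x y, N (x + y) <= N x + N y].

Definition unit_ball (n : nat) (N : 'rV[R]_n -> R) : set 'rV[R]_n :=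
  [set x | N x <= 1].

Definition unit_sphere (n : nat) (N : 'rV[R]_n -> R) : set 'rV[R]_n :=
  [set x | N x = 1].

Definition extreme_point (n : nat) (N : 'rV[R]_n -> R) (x : 'rV[R]_n) : Prop :=
  unit_ball N x /\
  forall y z (t : R), unit_ball N y -> unit_ball N z -> 0 < t -> t < 1 ->
    x = (1 - t) *: y + t *: z -> y = z.

Definition polyhedral (n : nat) (N : 'rV[R]_n -> R) : Prop :=
  finite_set [set x | extreme_point N x].

Definition op_norm (n m : nat) (NX : 'rV[R]_n -> R) (NY : 'rV[R]_m -> R)
  (A : 'M[R]_(n, m)) : R :=
  sup [set NY (x *m A) | x in unit_sphere NX].

Definition norm_attain (n m : nat) (NX : 'rV[R]_n -> R) (NY : 'rV[R]_m -> R)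
  (T : 'M[R]_(n, m)) : set 'rV[R]_n :=
  [set x | NX x = 1 /\ NY (x *m T) = op_norm NX NY T].

Definition convex_set (n : nat) (F : set 'rV[R]_n) : Prop :=
  forall x y (t : R), F x -> F y -> 0 <= t -> t <= 1 -> F ((1 - t) *: x + t *: y).

Definition face (n : nat) (N : 'rV[R]_n -> R) (F : set 'rV[R]_n) : Prop :=
  [/\ convex_set F, F `<=` unit_sphere N &
      forall x1 x2 (t : R), unit_sphere N x1 -> unit_sphere N x2 -> 0 < t -> t < 1 ->
        F ((1 - t) *: x1 + t *: x2) -> F x1 /\ F x2].

(* Linear functionals on L(X,Y) = 'M_(n,m) are represented by matrices B
   via the pairing <B, A> = sum_ij B_ij A_ij (every linear functional on
   'M_(n,m) is uniquely of this form). *)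
Definition pairing (n m : nat) (B A : 'M[R]_(n, m)) : R :=
  \sum_(i < n) \sum_(j < m) B i j * A i j.

Definition dual_op_norm (n m : nat) (NX : 'rV[R]_n -> R) (NY : 'rV[R]_m -> R)
  (B : 'M[R]_(n, m)) : R :=
  sup [set `|pairing B A| | A in [set A | op_norm NX NY A <= 1]].

Definition support_functionals (n m : nat) (NX : 'rV[R]_n -> R) (NY : 'rV[R]_m -> R)
  (T : 'M[R]_(n, m)) : set 'M[R]_(n, m) :=
  [set B | dual_op_norm NX NY B = 1 /\ pairing B T = 1].

Definition dim_span (n m : nat) (S : set 'M[R]_(n, m)) (k : nat) : Prop :=
  exists s : seq 'M[R]_(n, m),
    [/\ forall B, B \in s -> S B,
        forall B, S B -> B \in <<s>>%VS
      & \dim <<s>>%VS = k].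

Definition k_smooth (n m : nat) (NX : 'rV[R]_n -> R) (NY : 'rV[R]_m -> R)
  (T : 'M[R]_(n, m)) (k : nat) : Prop :=
  dim_span (support_functionals NX NY T) k.

End Defs.

(* Main.v *)
Require Import Defs.
From HB Require Import structures.
From mathcomp Require Import all_boot all_order all_algebra finmap.
From mathcomp Require Import boolp classical_sets cardinality reals.
From mathcomp Require Import topology normedtype.
From mathcomp Require Import ring lra.
Import Order.TTheory GRing.Theory Num.Theory numFieldNormedType.Exports.
Set Implicit Arguments. Unset Strict Implicit. Unset Printing Implicit Defensive.
Local Open Scope ring_scope.
Local Open Scope classical_set_scope.
Section Tools.
Variable R : realType.

Lemma entry_le n (x : 'rV[R]_n) i : `|x 0 i| <= `|x|.
Proof.
have -> : `|x| = mx_norm x by []. rewrite mx_normrE.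
by apply/bigmax_geP; right; exists (0, i).
Qed.

Variable m : nat.
Variable N : 'rV[R]_m -> R.
Hypothesis hN : is_norm N.

Lemma N0 : N 0 = 0.
Proof. by case: hN => _ _ hZ _; rewrite -(scale0r 0) hZ normr0 mul0r. Qed.

Lemma NN x : N (- x) = N x.
Proof. by case: hN => _ _ hZ _; rewrite -scaleN1r hZ normrN normr1 mul1r. Qed.

Lemma N_ge0 x : 0 <= N x. Proof. by case: hN. Qed.
Lemma NZ a x : N (a *: x) = `|a| * N x. Proof. by case: hN. Qed.
Lemma ND x y : N (x + y) <= N x + N y. Proof. by case: hN. Qed.

Lemma N_sum (I : finType) (P : pred I) (f : I -> 'rV[R]_m) :
  N (\sum_(i | P i) f i) <= \sum_(i | P i) N (f i).
Proof.
elim/big_ind2: _ => [|a b c d h1 h2|//]; first by rewrite N0.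
exact: le_trans (ND _ _) (lerD h1 h2).
Qed.

Lemma N_mul_le n (M : 'M[R]_(n, m)) x :
  N (x *m M) <= `|x| * \sum_i N (row i M).
Proof.
rewrite mulmx_sum_row (le_trans (N_sum _ _)) // mulr_sumr ler_sum // => i _.
by rewrite NZ ler_wpM2r ?N_ge0 // entry_le.
Qed.

Lemma N_lip n (M : 'M[R]_(n, m)) x y :
  `|N (x *m M) - N (y *m M)| <= `|x - y| * \sum_i N (row i M).
Proof.
apply: le_trans (N_mul_le M (x - y)); rewrite mulmxBl.
have t1 : N (y *m M) <= N (x *m M) + N (x *m M - y *m M).
  rewrite -(NN (x *m M - y *m M)) opprB.
  by have := ND (x *m M) (y *m M - x *m M); rewrite addrC subrK.
have t2 : N (x *m M) <= N (y *m M) + N (x *m M - y *m M).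
  by have := ND (y *m M) (x *m M - y *m M); rewrite addrC subrK.
rewrite ler_norml; apply/andP; split; lra.
Qed.

Lemma N_cont n (M : 'M[R]_(n, m)) : continuous (fun x : 'rV[R]_n => N (x *m M)).
Proof.
move=> x; apply/(@cvgrPdist_lt _ _ _ _ (nbhs_filter x)) => e e0.
set L := \sum_i N (row i M).
have L0 : 0 <= L by rewrite sumr_ge0 // => i _; exact: N_ge0.
apply/nbhs_ballP; exists (e / (L + 1)); first (simpl; by rewrite divr_gt0 // ltr_wpDl).
move=> z; rewrite mx_norm_ball /ball_ /= => hz.
apply: le_lt_trans (N_lip M x z) _.
rewrite (@le_lt_trans _ _ (e / (L + 1) * L)) //.
  by rewrite ler_wpM2r // ltW.
rewrite -mulrA gtr_pMr // ltr_pdivrMl ?ltr_wpDl // mulr1 ltrDl //.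
Qed.

End Tools.
Section Compact.
Variable R : realType.

Lemma pos_lb (s : seq R) :
  exists2 d0 : R, 0 < d0 & forall i, i \in s -> 0 < i -> d0 <= i.
Proof.
elim: s => [|a s [d hd hs]]; first by exists 1.
case: (ltrP 0 a) => ha.
  exists (Num.min d a); first by rewrite lt_min hd ha.
  move=> i; rewrite in_cons => /orP[/eqP ->|his] hi; first by rewrite ge_min lexx orbT.
  by rewrite ge_min hs.
exists d => // i; rewrite in_cons => /orP[/eqP ->|his] hi; last exact: hs.
by move: (lt_le_trans hi ha); rewrite ltxx.
Qed.

Variable n : nat.

Lemma nested_compact (K : set 'rV[R]_n) (P : R -> set 'rV[R]_n) :
  compact K -> (forall d, 0 < d -> closed (P d)) ->
  (forall d, 0 < d -> exists x, K x /\ P d x) ->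
  (forall d d', 0 < d -> d <= d' -> P d `<=` P d') ->
  exists x, K x /\ forall d, 0 < d -> P d x.
Proof.
move=> cK clP neP mP.
have := cK; rewrite compact_In0 => /(_ R [set d | 0 < d] (fun d => K `&` P d)).
case.
- by exists P.
- move=> D' sD'.
  have [d0 d00 hd0] := pos_lb D'.
  have [x [Kx Px]] := neP d0 d00.
  exists x => i /= iD'; split => //.
  have i0 : 0 < i by have := sD' i iD'; rewrite inE.
  exact: (mP d0 i d00 (hd0 i iD' i0)).
- move=> x hx; exists x; split; first by case: (hx 1 ltr01).
  by move=> d d0; case: (hx d d0).
Qed.

End Compact.

Section LB.
Variable R : realType.

Lemma cont_N n (N : 'rV[R]_n -> R) : is_norm N -> continuous N.
Proof.
move=> hN; have := N_cont (M:=1%:M) hN.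
by have -> : (fun x : 'rV[R]_n => N (x *m 1%:M)) = N by apply/funext => x; rewrite mulmx1.
Qed.

Lemma norm_lb n (N : 'rV[R]_n -> R) : is_norm N ->
  exists2 c, 0 < c & forall x, c * `|x| <= N x.
Proof.
move=> hN; apply: contrapT => H.
have H' : forall c, 0 < c -> exists x, N x < c * `|x|.
  move=> c c0; apply: contrapT => hx; apply: H; exists c => // x.
  by rewrite leNgt; apply/negP => hlt; apply: hx; exists x.
pose K := [set x : 'rV[R]_n | `|x| = 1].
have cK : compact K.
  apply: bounded_closed_compact.
    rewrite /= /bounded_near; near=> M => x /= Kx; rewrite Kx; near: M.
    by apply: nbhs_pinfty_ge; rewrite num_real.
  have -> : K = (fun x => `|x|) @^-1` [set x | x = 1] by [].
  apply: preimage_closed; last exact: closed_eq.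
  by move=> x _; exact: norm_continuous.
have := @nested_compact R n K (fun d => [set x | N x <= d]) cK.
case.
- move=> d _ /=.
  have -> : [set x | N x <= d] = N @^-1` [set y | y <= d] by [].
  apply: preimage_closed; last exact: closed_le.
  by move=> x _; exact: cont_N.
- move=> d d0; have [x hx] := H' d d0.
  have x0 : x != 0.
    apply/eqP => x0; move: hx; rewrite x0 (N0 hN) normr0 mulr0 ltxx //.
  have nx0 : 0 < `|x| by rewrite normr_gt0.
  exists (`|x|^-1 *: x); split.
    by rewrite /K /= normrZ ger0_norm ?invr_ge0 ?ltW // mulVf // gt_eqF.
  rewrite /= (NZ hN) ger0_norm ?invr_ge0 ?ltW // mulrC.
  by rewrite ltr_pdivrMr.
- move=> d d' _ dd' x /= hx; exact: le_trans dd'.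
- move=> x [Kx hx].
  have Nx0 : N x <= 0.
    rewrite leNgt; apply/negP => Nx; have := hx (N x / 2).
    rewrite divr_gt0 // => /(_ isT) /= h; lra.
  have : N x = 0 by apply/eqP; rewrite eq_le Nx0 (N_ge0 hN).
  case: hN => _ hd _ _ /hd x0; move: Kx; rewrite /K /= x0 normr0 => /eqP.
  by rewrite eq_sym oner_eq0.
Unshelve. all: by end_near.
Qed.

End LB.

Section HB.
Variable R : realType.

Definition dot m (g u : 'rV[R]_m) : R := \sum_j g 0 j * u 0 j.

Lemma dotDr m (g u v : 'rV[R]_m) : dot g (u + v) = dot g u + dot g v.
Proof. by rewrite /dot -big_split /=; apply: eq_bigr => j _; rewrite mxE mulrDr. Qed.
Lemma dotZr m (g u : 'rV[R]_m) a : dot g (a *: u) = a * dot g u.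
Proof. by rewrite /dot mulr_sumr; apply: eq_bigr => j _; rewrite mxE mulrCA. Qed.
Lemma dotNr m (g u : 'rV[R]_m) : dot g (- u) = - dot g u.
Proof. by rewrite -scaleN1r dotZr mulN1r. Qed.
Lemma dotBr m (g u v : 'rV[R]_m) : dot g (u - v) = dot g u - dot g v.
Proof. by rewrite dotDr dotNr. Qed.
Lemma dot0r m (g : 'rV[R]_m) : dot g 0 = 0.
Proof. by rewrite /dot big1 // => j _; rewrite mxE mulr0. Qed.
Lemma dotDl m (g h u : 'rV[R]_m) : dot (g + h) u = dot g u + dot h u.
Proof. by rewrite /dot -big_split /=; apply: eq_bigr => j _; rewrite mxE mulrDl. Qed.
Lemma dotZl m (g u : 'rV[R]_m) a : dot (a *: g) u = a * dot g u.
Proof. by rewrite /dot mulr_sumr; apply: eq_bigr => j _; rewrite mxE mulrA. Qed.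
Lemma dot0l m (u : 'rV[R]_m) : dot 0 u = 0.
Proof. by rewrite /dot big1 // => j _; rewrite mxE mul0r. Qed.
Lemma dot_delta_r m (g : 'rV[R]_m) k : dot g (delta_mx 0 k) = g 0 k.
Proof.
rewrite /dot (bigD1 k) //= big1 ?addr0 => [|j jk]; first by rewrite mxE !eqxx mulr1.
by rewrite mxE (negbTE jk) andbF mulr0.
Qed.
Lemma dot_delta_l m (u : 'rV[R]_m) k : dot (delta_mx 0 k) u = u 0 k.
Proof.
rewrite /dot (bigD1 k) //= big1 ?addr0 => [|j jk]; first by rewrite mxE !eqxx mul1r.
by rewrite mxE (negbTE jk) andbF mul0r.
Qed.

Variable m : nat.
Variable p : 'rV[R]_m -> R.
Hypothesis psub : forall u v, p (u + v) <= p u + p v.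
Hypothesis phom : forall a u, 0 < a -> p (a *: u) <= a * p u.

Lemma phomE a u : 0 < a -> p (a *: u) = a * p u.
Proof.
move=> a0; apply/eqP; rewrite eq_le phom //=.
have ai : 0 < a^-1 by rewrite invr_gt0.
have := @phom a^-1 (a *: u) ai; rewrite scalerA mulVf ?gt_eqF // scale1r.
by rewrite ler_pdivlMl.
Qed.

Lemma p0 : p 0 = 0.
Proof.
have := @phomE 2 0 (ltr0Sn R 1); rewrite scaler0; lra.
Qed.

Lemma HB_basic : exists g, forall u, dot g u <= p u.
Proof.
suff : forall k, (k <= m)%N -> exists g : 'rV[R]_m, forall u : 'rV[R]_m,
    (forall j : 'I_m, (k <= j)%N -> u 0 j = 0) -> dot g u <= p u.
  move=> /(_ m (leqnn m)) [g hg]; exists g => u; apply: hg => j.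
  by rewrite leqNgt ltn_ord.
elim=> [_|k IH hk].
  exists 0 => u hu; rewrite dot0l.
  have -> : u = 0 by apply/rowP => j; rewrite mxE hu.
  by rewrite p0.
have [g hg] := IH (ltnW hk).
pose kk : 'I_m := Ordinal hk.
pose e : 'rV[R]_m := delta_mx 0 kk.
pose S (u : 'rV[R]_m) := forall j : 'I_m, (k <= j)%N -> u 0 j = 0.
have S0 : S 0 by move=> j _; rewrite mxE.
have SD u v : S u -> S v -> S (u + v) by move=> hu hv j hj; rewrite mxE hu ?hv ?addr0.
have SZ a u : S u -> S (a *: u) by move=> hu j hj; rewrite mxE hu ?mulr0.
pose L := [set dot g u - p (u - e) | u in S].
have key u u' : S u -> S u' -> dot g u' - p (u' - e) <= p (u + e) - dot g u.
  move=> hu hu'; have := hg _ (SD _ _ hu hu'); rewrite dotDr.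
  have := psub (u + e) (u' - e); rewrite addrACA subrr addr0 => h1 h2; lra.
have hasL : has_ubound L by exists (p (0 + e) - dot g 0) => _ [u hu <-]; exact: key.
have neL : L !=set0 by exists (dot g 0 - p (0 - e)), 0.
pose c := sup L.
have cge u : S u -> dot g u - p (u - e) <= c by move=> hu; apply: ub_le_sup => //; exists u.
have cle u : S u -> c <= p (u + e) - dot g u.
  by move=> hu; apply: ge_sup => // _ [u' hu' <-]; exact: key.
exists (g + (c - g 0 kk) *: e) => u hu.
pose a := u 0 kk; pose u0 := u - a *: e.
have Su0 : S u0.
  move=> j hj; rewrite !mxE; have [jk|jk] := eqVneq j kk.
    by rewrite jk !eqxx mulr1 subrr.
  rewrite andbF mulr0 subr0; apply: hu.
  by rewrite ltn_neqAle hj andbT; apply: contra jk => /eqP hjk; apply/eqP/val_inj.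
have ue : u = u0 + a *: e by rewrite subrK.
have -> : dot (g + (c - g 0 kk) *: e) u = dot g u0 + a * c.
  rewrite dotDl dotZl dot_delta_l -/a {1}ue dotDr dotZr dot_delta_r.
  ring.
have [a0|a0|a0] := ltrgt0P a.
- have ai0 : 0 < a^-1 by rewrite invr_gt0.
  have := cle _ (SZ a^-1 _ Su0).
  rewrite dotZr => h.
  have : a * c <= a * p (a^-1 *: u0 + e) - dot g u0.
    by have := ler_wpM2l (ltW a0) h; rewrite mulrBr mulrA mulfV ?gt_eqF // mul1r.
  rewrite -phomE // scalerDr scalerA mulfV ?gt_eqF // scale1r -ue; lra.
- have b0 : 0 < - a by rewrite oppr_gt0.
  have bi0 : 0 < (- a)^-1 by rewrite invr_gt0.
  have := cge _ (SZ (- a)^-1 _ Su0).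
  rewrite dotZr => h.
  have : dot g u0 - (- a) * p ((- a)^-1 *: u0 - e) <= (- a) * c.
    by have := ler_wpM2l (ltW b0) h; rewrite mulrBr mulrA mulfV ?gt_eqF // mul1r.
  rewrite -phomE // scalerBr scalerA mulfV ?gt_eqF // scale1r scaleNr opprK -ue; lra.
- rewrite -/a a0 mul0r addr0.
  have -> : u = u0 by rewrite /u0 -/a a0 scale0r subr0.
  exact: hg.
Qed.


End HB.

Section HB2.
Variable R : realType.
Variable m : nat.
Variable p : 'rV[R]_m -> R.
Hypothesis psub : forall u v, p (u + v) <= p u + p v.
Hypothesis phom : forall a u, 0 < a -> p (a *: u) <= a * p u.
Let phomE := phomE phom.
Let p0 := p0 phom.

Lemma phom_ge a u : 0 < a -> a * p u <= p (a *: u).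
Proof. by move=> a0; rewrite phomE. Qed.

Lemma pN_ge u : - p (- u) <= p u.
Proof. by have := psub u (- u); rewrite subrr p0; lra. Qed.

Variable z : 'rV[R]_m.

Definition Ez u := [set p (u - a *: z) + a * p z | a in [set: R]].
Definition q u := inf (Ez u).

Lemma Ez_lb u x : Ez u x -> - p (- u) <= x.
Proof.
move=> [a _ <-].
have h1 : p (- (a *: z)) <= p (u - a *: z) + p (- u).
  by have := psub (u - a *: z) (- u); rewrite addrAC subrr add0r.
have h2 : 0 <= a * p z + p (- (a *: z)).
  have [a0|a0|->] := ltrgt0P a.
  - rewrite -scalerN phomE //; have := pN_ge z; nra.
  - rewrite -scaleNr phomE ?oppr_gt0 //; lra.
  - by rewrite scale0r oppr0 p0 mul0r addr0.
lra.
Qed.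

Lemma Ez_ne u : Ez u !=set0.
Proof. by exists (p (u - 0 *: z) + 0 * p z), 0. Qed.

Lemma Ez_hlb u : has_lbound (Ez u).
Proof. by exists (- p (- u)) => x; exact: Ez_lb. Qed.

Lemma q_le u x : Ez u x -> q u <= x.
Proof. by move=> hx; apply: ge_inf => //; exact: Ez_hlb. Qed.

Lemma q_le_p u : q u <= p u.
Proof. by apply: q_le; exists 0 => //; rewrite scale0r subr0 mul0r addr0. Qed.

Lemma q_sub u v : q (u + v) <= q u + q v.
Proof.
have h : forall x y, Ez u x -> Ez v y -> q (u + v) <= x + y.
  move=> _ _ [a _ <-] [b _ <-].
  have hx : Ez (u + v) (p (u + v - (a + b) *: z) + (a + b) * p z) by exists (a + b).
  apply: le_trans (q_le hx) _.
  have := psub (u - a *: z) (v - b *: z).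
  rewrite addrACA -opprD -scalerDl; lra.
have h2 : forall y, Ez v y -> q (u + v) - y <= q u.
  move=> y hy; apply: lb_le_inf; first exact: Ez_ne.
  by move=> x hx; have := h x y hx hy; lra.
have : q (u + v) - q u <= q v.
  apply: lb_le_inf; first exact: Ez_ne.
  by move=> y hy; have := h2 y hy; lra.
lra.
Qed.

Lemma q_hom c u : 0 < c -> q (c *: u) <= c * q u.
Proof.
move=> c0; rewrite -ler_pdivrMl //; apply: lb_le_inf; first exact: Ez_ne.
move=> _ [a _ <-]; rewrite ler_pdivrMl //.
have hx : Ez (c *: u) (p (c *: u - (c * a) *: z) + (c * a) * p z) by exists (c * a).
apply: le_trans (q_le hx) _.
rewrite -scalerA -scalerBr phomE //; lra.
Qed.

Lemma HB_exact : exists g, (forall u, dot g u <= p u) /\ dot g z = p z.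
Proof.
have [g hg] := HB_basic q_sub q_hom.
exists g; split => [u|]; first exact: le_trans (hg u) (q_le_p u).
apply/eqP; rewrite eq_le; apply/andP; split.
  apply: le_trans (hg z) _; apply: q_le; exists 1 => //.
  by rewrite scale1r subrr p0 mul1r add0r.
have : dot g (- z) <= - p z.
  apply: le_trans (hg _) _; apply: q_le; exists (-1) => //.
  by rewrite scaleN1r opprK addNr p0 mulN1r add0r.
rewrite dotNr; lra.
Qed.

End HB2.

Section DerivY.
Variable R : realType.
Variable m : nat.
Variable N : 'rV[R]_m -> R.
Hypothesis hN : is_norm N.
Variable y : 'rV[R]_m.
Hypothesis Ny : N y = 1.

Definition Qd (w : 'rV[R]_m) (s : R) := (N (y + s *: w) - 1) / s.
Definition Ed w := [set Qd w s | s in [set s : R | 0 < s]].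
Definition phi w := inf (Ed w).

Lemma Qd_lb w s : 0 < s -> - N w <= Qd w s.
Proof.
move=> s0; rewrite /Qd ler_pdivlMr //.
have := ND hN (y + s *: w) (- (s *: w)).
rewrite addrK (NN hN) (NZ hN) (ger0_norm (ltW s0)) Ny; lra.
Qed.

Lemma Qd_mono w t s : 0 < t -> t <= s -> Qd w t <= Qd w s.
Proof.
move=> t0 ts; have s0 : 0 < s by exact: lt_le_trans ts.
rewrite /Qd ler_pdivrMr // mulrAC ler_pdivlMr //.
have e : y + t *: w = (1 - t / s) *: y + (t / s) *: (y + s *: w).
  rewrite scalerDr scalerA mulfVK ?gt_eqF // addrA -scalerDl subrK scale1r //.
have h1 : 0 <= 1 - t / s by rewrite subr_ge0 ler_pdivrMr // mul1r.
have h2 : 0 <= t / s by rewrite divr_ge0 // ltW.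
have := ND hN ((1 - t / s) *: y) ((t / s) *: (y + s *: w)).
rewrite -e !(NZ hN) !ger0_norm // Ny mulr1 => h.
have : (N (y + t *: w) - 1) <= t / s * (N (y + s *: w) - 1) by lra.
move=> h3; have := ler_wpM2r (ltW s0) h3.
have -> : t / s * (N (y + s *: w) - 1) * s = (N (y + s *: w) - 1) * t.
  by field; rewrite gt_eqF.
by [].
Qed.

Lemma Ed_ne w : Ed w !=set0.
Proof. by exists (Qd w 1), 1 => //=; exact: ltr01. Qed.

Lemma Ed_hlb w : has_lbound (Ed w).
Proof. by exists (- N w) => _ [s s0 <-]; exact: Qd_lb. Qed.

Lemma phi_le w s : 0 < s -> phi w <= Qd w s.
Proof. by move=> s0; apply: ge_inf; [exact: Ed_hlb | exists s]. Qed.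

Lemma phi_sub u v : phi (u + v) <= phi u + phi v.
Proof.
have h : forall s1 s2, 0 < s1 -> 0 < s2 -> phi (u + v) <= Qd u s1 + Qd v s2.
  move=> s1 s2 s10 s20; pose s := Num.min s1 s2.
  have s0 : 0 < s by rewrite lt_min s10 s20.
  have s20' : 0 < s / 2 by rewrite divr_gt0.
  apply: le_trans (phi_le _ s20') _.
  apply: (@le_trans _ _ (Qd u s + Qd v s)); last first.
    by rewrite lerD // Qd_mono // ge_min lexx ?orbT.
  rewrite /Qd -mulrDl ler_pdivrMr // mulrAC.
  have -> : (N (y + s *: u) - 1 + (N (y + s *: v) - 1)) * (s / 2) / s = (N (y + s *: u) - 1 + (N (y + s *: v) - 1)) / 2.
    by field; rewrite gt_eqF.
  have e : y + s / 2 *: (u + v) = 2^-1 *: (y + s *: u) + 2^-1 *: (y + s *: v).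
    by apply/rowP => j; rewrite !mxE; field.
  have := ND hN (2^-1 *: (y + s *: u)) (2^-1 *: (y + s *: v)).
  rewrite -e !(NZ hN) ger0_norm ?invr_ge0 //; lra.
have h2 : forall s2, 0 < s2 -> phi (u + v) - Qd v s2 <= phi u.
  move=> s2 s20; apply: lb_le_inf; first exact: Ed_ne.
  by move=> _ [s1 s10 <-]; have := h s1 s2 s10 s20; lra.
have : phi (u + v) - phi u <= phi v.
  apply: lb_le_inf; first exact: Ed_ne.
  by move=> _ [s2 s20 <-]; have := h2 s2 s20; lra.
lra.
Qed.

Lemma phi_hom c w : 0 < c -> phi (c *: w) <= c * phi w.
Proof.
move=> c0; rewrite -ler_pdivrMl //; apply: lb_le_inf; first exact: Ed_ne.
move=> _ [s s0 <-]; rewrite ler_pdivrMl //.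
have sc0 : 0 < s / c by rewrite divr_gt0.
apply: le_trans (phi_le _ sc0) _.
rewrite /Qd scalerA mulfVK ?gt_eqF // invf_div mulrA mulrAC.
by rewrite [c * _]mulrC.
Qed.

Lemma deriv_Y z :
  (forall g, (forall u, dot g u <= N u) -> dot g y = 1 -> dot g z <= 0) ->
  forall eps, 0 < eps -> exists2 s, 0 < s & N (y + s *: z) <= 1 + eps * s.
Proof.
move=> hz eps e0.
have [g [hg gz]] := HB_exact phi_sub phi_hom z.
have gN u : dot g u <= N u.
  apply: le_trans (hg u) _; apply: le_trans (phi_le _ ltr01) _.
  rewrite /Qd divr1 scale1r; have := ND hN y u; rewrite Ny; lra.
have gy : dot g y = 1.
  apply/eqP; rewrite eq_le; apply/andP; split; first by rewrite -Ny gN.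
  have h2 : 0 < (2 : R)^-1 by rewrite invr_gt0.
  have := le_trans (hg (- y)) (phi_le _ h2).
  rewrite /Qd dotNr.
  have -> : y + 2^-1 *: - y = 2^-1 *: y.
    by rewrite scalerN -{1}(scale1r y) -scalerBl; congr (_ *: _); field.
  rewrite (NZ hN) Ny mulr1 (ger0_norm (ltW h2)).
  have -> : (2^-1 - 1) / 2^-1 = - 1 :> R by field.
  lra.
have phz : phi z <= 0 by rewrite -gz; exact: hz.
have [_ [s s0 <-] hs] := inf_adherent e0 (conj (Ed_ne z) (Ed_hlb z)).
exists s => //.
have : Qd z s < eps by rewrite -/(phi z) in hs; lra.
rewrite /Qd ltr_pdivrMr // => h; lra.
Qed.

End DerivY.
Section LinAlg.
Variable R : realType.

Lemma span_set (vT : vectType R) (S : set vT) :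
  exists s : seq vT, (forall x, x \in s -> S x) /\ (forall x, S x -> x \in <<s>>%VS).
Proof.
pose P k := `[< exists s : seq vT, (forall x, x \in s -> S x) /\ \dim <<s>>%VS = k >].
have P0 : exists k, P k.
  by exists 0%N; apply/asboolP; exists [::]; split; [move=> x; rewrite in_nil | rewrite span_nil dimv0].
have Pb : forall k, P k -> (k <= dim vT)%N.
  move=> k /asboolP [s [_ <-]]; rewrite -dimvf; exact: dimvS (subvf _).
case: (ex_maxnP P0 Pb) => k /asboolP [s [sS ds]] kmax.
exists s; split => // x Sx; apply: contrapT => /negP xs.
have : P (\dim <<x :: s>>%VS).
  apply/asboolP; exists (x :: s); split => // y; rewrite in_cons => /orP[/eqP ->|]//.
  exact: sS.
move=> /kmax; rewrite -ds; apply/negP; rewrite -ltnNge.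
have sub : (<<s>> <= <<x :: s>>)%VS by rewrite span_cons addvSr.
rewrite ltn_neqAle (dimvS sub) andbT.
rewrite (dimv_leqif_sup sub); apply: contra xs => hs.
by apply: (subvP hs); apply: memv_span; rewrite in_cons eqxx.
Qed.

Lemma vbasis_inj l (V : {vspace 'rV[R]_l}) (a : 'rV[R]_(\dim V)) :
  a *m (\matrix_(i < \dim V) (vbasis V)`_i) = 0 -> a = 0.
Proof.
move=> h; have /freeP hk := basis_free (vbasisP V).
have := hk (fun i => a 0 i).
have -> : \sum_(i < \dim V) a 0 i *: (vbasis V)`_i = 0.
  by rewrite -[RHS]h mulmx_sum_row; apply: eq_bigr => i _; rewrite rowK.
by move=> /(_ erefl) h2; apply/rowP => i; rewrite h2 mxE.
Qed.

Lemma vbasis_coord l (V : {vspace 'rV[R]_l}) x : x \in V ->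
  exists a : 'rV[R]_(\dim V), x = a *m (\matrix_(i < \dim V) (vbasis V)`_i).
Proof.
move=> xV; exists (\row_i coord (vbasis V) i x).
rewrite mulmx_sum_row {1}(coord_vbasis xV); apply: eq_bigr => i _.
by rewrite rowK mxE.
Qed.

Lemma mul_inj k l r (Y : 'M[R]_(l, r)) (M : 'M[R]_(k, l)) :
  (forall a : 'rV_l, a *m Y = 0 -> a = 0) -> M *m Y = 0 -> M = 0.
Proof.
move=> hY h; apply/row_matrixP => i; rewrite row0; apply: hY.
by rewrite -row_mul h row0.
Qed.

Definition pairingE n m (B A : 'M[R]_(n, m)) :
  pairing B A = \sum_(i < n) \sum_(j < m) B i j * A i j := erefl.

Lemma pairingDr n m (B A C : 'M[R]_(n, m)) : pairing B (A + C) = pairing B A + pairing B C.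
Proof.
rewrite !pairingE -big_split; apply: eq_bigr => i _.
by rewrite -big_split; apply: eq_bigr => j _; rewrite mxE mulrDr.
Qed.

Lemma pairingZr n m (B A : 'M[R]_(n, m)) a : pairing B (a *: A) = a * pairing B A.
Proof.
rewrite !pairingE mulr_sumr; apply: eq_bigr => i _.
by rewrite mulr_sumr; apply: eq_bigr => j _; rewrite mxE mulrCA.
Qed.

Lemma pairing0r n m (B : 'M[R]_(n, m)) : pairing B 0 = 0.
Proof. by rewrite -(scale0r 0) pairingZr mul0r. Qed.

Lemma pairingNr n m (B A : 'M[R]_(n, m)) : pairing B (- A) = - pairing B A.
Proof. by rewrite -scaleN1r pairingZr mulN1r. Qed.

Lemma pairingBr n m (B A C : 'M[R]_(n, m)) : pairing B (A - C) = pairing B A - pairing B C.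
Proof. by rewrite pairingDr pairingNr. Qed.

Lemma pairing_sumr n m (I : finType) (B : 'M[R]_(n, m)) (f : I -> 'M[R]_(n, m)) :
  pairing B (\sum_i f i) = \sum_i pairing B (f i).
Proof.
elim/big_ind2: _ => [|a b c d h1 h2|//]; first by rewrite pairing0r.
by rewrite pairingDr h1 h2.
Qed.

Lemma pairing_self_gt0 n m (w : 'M[R]_(n, m)) : w != 0 -> 0 < pairing w w.
Proof.
move=> w0.
have ge : 0 <= pairing w w.
  by rewrite pairingE sumr_ge0 // => i _; rewrite sumr_ge0 // => j _; rewrite -expr2 sqr_ge0.
rewrite lt_neqAle ge andbT eq_sym; apply: contra w0 => /eqP h.
have sq : forall x : R, 0 <= x * x by move=> x; rewrite -expr2 sqr_ge0.
apply/eqP/matrixP => i j; rewrite mxE.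
have hi := @psumr_eq0P _ _ predT (fun i => \sum_(j < m) w i j * w i j)
  (fun i _ => sumr_ge0 _ (fun j _ => sq (w i j))) h i isT.
have := @psumr_eq0P _ _ predT (fun j => w i j * w i j)
  (fun j _ => sq (w i j)) hi j isT.
by move/eqP; rewrite mulf_eq0 orbb => /eqP.
Qed.

Lemma pair_tens n m (x : 'rV[R]_n) (g : 'rV[R]_m) (A : 'M[R]_(n, m)) :
  pairing (x^T *m g) A = dot g (x *m A).
Proof.
rewrite pairingE /dot exchange_big /=; apply: eq_bigr => j _.
rewrite mxE mulr_sumr; apply: eq_bigr => i _.
rewrite !mxE big_ord1 !mxE; ring.
Qed.

End LinAlg.

Section Key.
Variable R : realType.

Lemma key_lemma n m (NX : 'rV[R]_n -> R) (NY : 'rV[R]_m -> R)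
  (hNX : is_norm NX) (hNY : is_norm NY) (T : 'M[R]_(n, m)) (F : set 'rV[R]_n)
  (y0 : 'rV[R]_m) (Ny0 : NY y0 = 1)
  (FT : forall x, F x -> x *m T = y0)
  (hTb : forall x, NX x = 1 -> NY (x *m T) <= 1)
  (hMT : forall x, NX x = 1 -> NY (x *m T) = 1 -> F x \/ F (- x))
  (A : 'M[R]_(n, m))
  (hA : forall x g, F x -> (forall u, dot g u <= NY u) -> dot g y0 = 1 ->
          dot g (x *m A) = 0)
  (eps : R) (e0 : 0 < eps) :
  exists2 t, 0 < t & forall x, NX x = 1 -> NY (x *m (T + t *: A)) <= 1 + eps * t.
Proof.
apply: contrapT => H.
have H' : forall t, 0 < t -> exists x, NX x = 1 /\ 1 + eps * t <= NY (x *m (T + t *: A)).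
  move=> t t0; apply: contrapT => hx; apply: H; exists t => // x hx1.
  rewrite leNgt; apply/negP => hlt; apply: hx; exists x; split => //; exact: ltW.
have [c c0 hc] := norm_lb hNX.
pose K := [set x : 'rV[R]_n | NX x = 1].
have cK : compact K.
  apply: bounded_closed_compact.
    rewrite /= /bounded_near; near=> M => x /= Kx.
    have : `|x| <= c^-1 by rewrite -(ler_pM2l c0) mulfV ?gt_eqF // -Kx hc.
    move/le_trans; apply; near: M.
    by apply: nbhs_pinfty_ge; rewrite num_real.
  have -> : K = NX @^-1` [set x | x = 1] by [].
  apply: preimage_closed; last exact: closed_eq.
  by move=> x _; exact: cont_N.
pose P s := K `&` [set x | 1 + eps * s <= NY (x *m (T + s *: A))].
have := @nested_compact R n K P cK.
case.
- move=> d _; apply: closedI.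
    have -> : K = NX @^-1` [set x | x = 1] by [].
    apply: preimage_closed; last exact: closed_eq.
    by move=> x _; exact: cont_N.
  have -> : [set x | 1 + eps * d <= NY (x *m (T + d *: A))] =
    (fun x => NY (x *m (T + d *: A))) @^-1` [set y | 1 + eps * d <= y] by [].
  apply: preimage_closed; last exact: closed_ge.
  by move=> x _; exact: N_cont.
- by move=> d d0; have [x [h1 h2]] := H' d d0; exists x.
- move=> d d' d0 dd' x [Kx hx]; split => //.
  have d'0 : 0 < d' by exact: lt_le_trans dd'.
  pose r := d / d'.
  have r0 : 0 < r by rewrite divr_gt0.
  have r1 : r <= 1 by rewrite ler_pdivrMr // mul1r.
  have hr : r * d' = d by rewrite /r mulfVK ?gt_eqF.
  have e : x *m (T + d *: A) = (1 - r) *: (x *m T) + r *: (x *m (T + d' *: A)).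
    rewrite !mulmxDr -!scalemxAr.
    by apply/rowP => j; rewrite !mxE -hr; ring.
  move: hx; rewrite /= e.
  have := ND hNY ((1 - r) *: (x *m T)) (r *: (x *m (T + d' *: A))).
  have r1' : 0 <= 1 - r by rewrite subr_ge0.
  rewrite !(NZ hNY) (ger0_norm r1') (ger0_norm (ltW r0)).
  have := hTb x Kx; have := N_ge0 hNY (x *m T).
  set a := NY (x *m T); set ph := NY (x *m (T + d' *: A)).
  rewrite -hr => ha0 ha1 h1 h2.
  have h3 : r * (1 + eps * d') <= r * ph by nra.
  by rewrite -(ler_pM2l r0).
- move=> x [Kx hx].
  have hxT : NY (x *m T) = 1.
    apply/eqP; rewrite eq_le hTb //=; rewrite leNgt; apply/negP => ha.
    set a := NY (x *m T) in ha.
    set b := NY (x *m A).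
    have b0 : 0 <= b by exact: N_ge0.
    pose s := (1 - a) / (b + 1).
    have s0 : 0 < s by rewrite divr_gt0 ?subr_gt0 // ltr_wpDl.
    have hs : s * (b + 1) = 1 - a by rewrite /s mulfVK // gt_eqF // ltr_wpDl.
    have [_ h] := hx s s0.
    have := ND hNY (x *m T) (s *: (x *m A)).
    rewrite (NZ hNY) (ger0_norm (ltW s0)) scalemxAr -mulmxDr -/a -/b => h2.
    have h3 : 0 < eps * s by rewrite mulr_gt0.
    move: h => /= h; nra.
  have [x' Fx' hsx] : exists2 x', F x' &
      forall s, NY (x *m (T + s *: A)) = NY (y0 + s *: (x' *m A)).
    case: (hMT x Kx hxT) => h.
      exists x => // s; by rewrite mulmxDr -scalemxAr FT.
    exists (- x) => // s.
    rewrite -(NN hNY) mulmxDr -scalemxAr -(FT _ h) !mulNmx scalerN opprD.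
    by [].
  have hz : forall g, (forall u, dot g u <= NY u) -> dot g y0 = 1 ->
      dot g (x' *m A) <= 0.
    by move=> g h1 h2; rewrite (hA x' g Fx' h1 h2).
  have e2 : 0 < eps / 2 by rewrite divr_gt0.
  have [s s0 hs] := deriv_Y hNY Ny0 hz e2.
  have [_ h] := hx s s0; move: h; rewrite /= hsx => h.
  have h3 : 0 < eps * s by rewrite mulr_gt0.
  lra.
Unshelve. all: by end_near.
Qed.

End Key.

Unset Implicit Arguments.

Theorem mainTheorem14 (R : realType) (n m : nat)
  (NX : 'rV[R]_n -> R) (NY : 'rV[R]_m -> R)
  (hNX : is_norm NX) (hNY : is_norm NY)
  (hpX : polyhedral NX) (hpY : polyhedral NY)
  (T : 'M[R]_(n, m)) (hT : op_norm NX NY T = 1)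
  (F : set 'rV[R]_n) (hF : face NX F)
  (hM : norm_attain NX NY T = F `|` [set - x | x in F])
  (y1 y2 : 'rV[R]_m) (hy : y1 <> y2)
  (himg : [set x *m T | x in norm_attain NX NY T] = [set y1; y2])
  (k : nat) (hk : k_smooth NX NY T k) :
  exists p q : nat, [/\ (1 <= p <= n)%N, (1 <= q <= m)%N & k = (p * q)%N].
Proof.
case: hF => Fconv FS Fface.
have FM : forall x, F x -> norm_attain NX NY T x by move=> x Fx; rewrite hM; left.
have Fsph : forall x, F x -> NX x = 1 by move=> x /FS.
have imT : forall x, norm_attain NX NY T x -> x *m T = y1 \/ x *m T = y2.
  move=> x hx; have : [set x *m T | x in norm_attain NX NY T] (x *m T) by exists x.
  by rewrite himg.
have [xF FxF] : exists xF, F xF.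
  have : [set x *m T | x in norm_attain NX NY T] y1 by rewrite himg; left.
  case=> x; rewrite hM => -[Fx|[x' Fx' _]] _; by [exists x | exists x'].
pose y0 := xF *m T.
have mideq : forall a b : 'rV[R]_m, (1 - 2^-1) *: a + 2^-1 *: b = a -> a = b.
  move=> a b /rowP h; apply/rowP => j; have := h j; rewrite !mxE => h'; lra.
have mideq2 : forall a b : 'rV[R]_m, (1 - 2^-1) *: a + 2^-1 *: b = b -> a = b.
  move=> a b /rowP h; apply/rowP => j; have := h j; rewrite !mxE => h'; lra.
have midc : forall a b : 'rV[R]_m, a <> b -> (a = y1 \/ a = y2) -> (b = y1 \/ b = y2) ->
    (1 - 2^-1) *: a + 2^-1 *: b = y1 \/ (1 - 2^-1) *: a + 2^-1 *: b = y2 -> False.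
  move=> a b hab ha hb hm; apply: hab; case: ha hb hm => -> [] -> [] h //.
  exact: (mideq _ _ h). exact: (mideq2 _ _ h). exact: (mideq2 _ _ h). exact: (mideq _ _ h).
have FT : forall x, F x -> x *m T = y0.
  move=> x Fx; apply: contrapT => hne.
  have h20 : (0 : R) <= 2^-1 by rewrite invr_ge0.
  have h21 : (2^-1 : R) <= 1 by rewrite invf_le1 // ler1n.
  have Fmid := Fconv x xF 2^-1 Fx FxF h20 h21.
  apply: (midc (x *m T) y0 hne (imT _ (FM _ Fx)) (imT _ (FM _ FxF))).
  by have := imT _ (FM _ Fmid); rewrite mulmxDl -!scalemxAl.
have [c c0 hc] := norm_lb hNX.
have bnd : forall A : 'M[R]_(n, m), exists M, forall x, NX x = 1 -> NY (x *m A) <= M.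
  move=> A; exists (c^-1 * \sum_i NY (row i A)) => x hx.
  apply: le_trans (N_mul_le hNY A x) _; apply: ler_wpM2r.
    by rewrite sumr_ge0 // => i _; exact: N_ge0.
  by rewrite -(ler_pM2l c0) mulfV ?gt_eqF // -hx hc.
have opn_ub : forall A x, NX x = 1 -> NY (x *m A) <= op_norm NX NY A.
  move=> A x hx; apply: ub_le_sup; last by exists x.
  by have [M hM'] := bnd A; exists M => _ [x' hx' <-]; exact: hM'.
have opn_le : forall A b, (forall x, NX x = 1 -> NY (x *m A) <= b) -> op_norm NX NY A <= b.
  move=> A b hb; apply: ge_sup; first by exists (NY (xF *m A)), xF => //; exact: Fsph.
  by move=> _ [x hx <-]; exact: hb.
have hTb : forall x, NX x = 1 -> NY (x *m T) <= 1 by move=> x hx; rewrite -hT; exact: opn_ub.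
have Ny0 : NY y0 = 1 by have [_ ->] := FM _ FxF.
pose G := fun g : 'rV[R]_m => (forall u, dot g u <= NY u) /\ dot g y0 = 1.
have [g0 Gg0] : exists g, G g.
  have hom : forall a u, 0 < a -> NY (a *: u) <= a * NY u.
    by move=> a u a0; rewrite (NZ hNY) (ger0_norm (ltW a0)).
  have [g [h1 h2]] := HB_exact (ND hNY) hom y0.
  by exists g; split => //; rewrite h2.
have Gabs : forall g u, G g -> `|dot g u| <= NY u.
  move=> g u [hg _]; rewrite ler_norml; have := hg (- u); rewrite dotNr (NN hNY).
  have := hg u; lra.
pose J := support_functionals NX NY T.
have tensJ : forall x g, F x -> G g -> J (x^T *m g).
  move=> x g Fx Gg; split; last by rewrite pair_tens FT //; case: Gg.
  pose E := [set `|pairing (x^T *m g) A| | A in [set A | op_norm NX NY A <= 1]].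
  have E1 : E 1.
    by exists T; [rewrite /= hT | rewrite pair_tens FT // (proj2 Gg) normr1].
  have Eub : forall e, E e -> e <= 1.
    move=> _ [A hA <-]; rewrite pair_tens; apply: le_trans (Gabs _ _ Gg) _.
    exact: le_trans (opn_ub _ _ (Fsph _ Fx)) hA.
  apply/eqP; rewrite eq_le; apply/andP; split.
    by apply: ge_sup; [exists 1 | exact: Eub].
  by apply: ub_le_sup; [exists 1 | ].
have Jle : forall B C, J B -> (forall x, NX x = 1 -> NY (x *m C) <= 1) -> pairing B C <= 1.
  move=> B C [hB _] hC.
  pose E := [set `|pairing B A| | A in [set A | op_norm NX NY A <= 1]].
  have hs : has_sup E.
    apply: contrapT => hns; move: hB; rewrite /dual_op_norm -/E sup_out //.
    by move/eqP; rewrite eq_sym oner_eq0.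
  apply: le_trans (ler_norm _) _; rewrite -hB; apply: sup_upper_bound => //.
  by exists C => //; exact: opn_le.
have hMT : forall x, NX x = 1 -> NY (x *m T) = 1 -> F x \/ F (- x).
  move=> x h1 h2; have : norm_attain NX NY T x by split => //; rewrite hT.
  rewrite hM => -[Fx|[x' Fx' <-]]; [by left | by right; rewrite opprK].
have key2 : forall A B, (forall x g, F x -> G g -> dot g (x *m A) = 0) -> J B ->
    pairing B A <= 0.
  move=> A B hA JB; rewrite leNgt; apply/negP => hpos.
  have hpos2 : 0 < pairing B A / 2 by rewrite divr_gt0.
  have [t t0 ht] := key_lemma hNX hNY Ny0 FT hTb hMT
     (fun x g Fx h1 h2 => hA x g Fx (conj h1 h2)) hpos2.
  set cc := 1 + pairing B A / 2 * t in ht.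
  have cc0 : 0 < cc by rewrite /cc ltr_wpDr // ?ltW // mulr_gt0.
  have := Jle B (cc^-1 *: (T + t *: A)) JB.
  have hC : forall x, NX x = 1 -> NY (x *m (cc^-1 *: (T + t *: A))) <= 1.
    move=> x hx; rewrite -scalemxAr (NZ hNY) ger0_norm ?invr_ge0 ?(ltW cc0) //.
    by rewrite ler_pdivrMl // mulr1; exact: ht.
  move=> /(_ hC); rewrite pairingZr pairingDr pairingZr (proj2 JB).
  rewrite ler_pdivrMl // mulr1 /cc => h; nra.
case: hk => sJ [sJJ JsJ dimJ].
have [sF [sFF FsF]] := span_set F.
have [sG [sGG GsG]] := span_set G.
pose V := <<sF>>%VS; pose W := <<sG>>%VS.
pose p := \dim V; pose q := \dim W.
pose X : 'M[R]_(p, n) := \matrix_(i < p) (vbasis V)`_i.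
pose Gm : 'M[R]_(q, m) := \matrix_(j < q) (vbasis W)`_j.
pose Phi := linfun (mulmxr Gm \o mulmx X^T).
have PhiE : forall C, Phi C = X^T *m C *m Gm by move=> C; rewrite lfunE.
pose U := limg Phi.
have tens_base : forall x g, x \in sF -> g \in sG -> x^T *m g \in <<sJ>>%VS.
  by move=> x g hx hg; apply: JsJ; apply: tensJ; [exact: sFF | exact: sGG].
have tens1 : forall x g, x \in V -> g \in sG -> x^T *m g \in <<sJ>>%VS.
  move=> x g hx hg.
  have : x \in (linfun (mulmxr g \o @trmx R 1 n) @^-1: <<sJ>>)%VS.
    move: x hx; apply/subvP; apply/span_subvP => x hx.
    by rewrite -memv_preim lfunE /=; exact: tens_base.
  by rewrite -memv_preim lfunE.
have tens2 : forall x g, x \in V -> g \in W -> x^T *m g \in <<sJ>>%VS.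
  move=> x g hx hg.
  have : g \in (linfun (@mulmx R n 1 m x^T) @^-1: <<sJ>>)%VS.
    move: g hg; apply/subvP; apply/span_subvP => g hg.
    by rewrite -memv_preim lfunE /=; exact: tens1.
  by rewrite -memv_preim lfunE.
have inU : forall x g, x \in V -> g \in W -> x^T *m g \in U.
  move=> x g hx hg.
  have [a ->] := vbasis_coord hx; have [b ->] := vbasis_coord hg.
  have -> : (a *m X)^T *m (b *m Gm) = X^T *m (a^T *m b) *m Gm.
    by rewrite trmx_mul !mulmxA.
  by rewrite -PhiE; apply: memv_img; exact: memvf.
have UsJ : (U <= <<sJ>>)%VS.
  apply/subvP => D /memv_imgP [C _ ->].
  rewrite (matrix_sum_delta C) !linear_sum; apply: memv_suml => i _.
  rewrite linear_sum; apply: memv_suml => j _; rewrite linearZ; apply: memvZ.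
  change (Phi (delta_mx i j) \in <<sJ>>%VS).
  rewrite PhiE -(@mul_delta_mx _ p 1 q 0 i j) mulmxA -trmx_delta -trmx_mul -rowE.
  rewrite -mulmxA -rowE !rowK.
  apply: tens2; apply: vbasis_mem; apply: mem_nth; by rewrite size_tuple.
have sJU : (<<sJ>> <= U)%VS.
  apply/span_subvP => B hB; have JB := sJJ B hB.
  apply: contrapT => /negP BU.
  pose w := B - projv U B.
  have w0 : w != 0.
    apply: contra BU => /eqP h; have -> : B = projv U B by apply/eqP; rewrite -subr_eq0 -/w h.
    exact: memv_proj.
  pose A : 'M[R]_(n, m) :=
    \matrix_(i, j) pairing w (delta_mx i j - projv U (delta_mx i j)).
  have pA : forall D, pairing D A = pairing w (D - projv U D).
    move=> D.
    have e : D - projv U D = \sum_i \sum_j D i j *: (delta_mx i j - projv U (delta_mx i j)).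
      rewrite {1}(matrix_sum_delta D) [X in projv U X](matrix_sum_delta D) linear_sum.
      rewrite -sumrB; apply: eq_bigr => i _; rewrite linear_sum -sumrB.
      by apply: eq_bigr => j _; rewrite linearZ scalerBr.
    rewrite e pairing_sumr pairingE; apply: eq_bigr => i _.
    rewrite pairing_sumr; apply: eq_bigr => j _.
    by rewrite pairingZr mxE.
  have hA : forall x g, F x -> G g -> dot g (x *m A) = 0.
    move=> x g Fx Gg; rewrite -pair_tens pA projv_id ?subrr ?pairing0r //.
    by apply: inU; [exact: FsF | exact: GsG].
  have hA' : forall x g, F x -> G g -> dot g (x *m (- A)) = 0.
    by move=> x g Fx Gg; rewrite mulmxN dotNr hA // oppr0.
  have h1 := key2 A B hA JB; have h2 := key2 (- A) B hA' JB.
  have : pairing B A = pairing w w by rewrite pA.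
  have := pairing_self_gt0 w0; move: h2; rewrite pairingNr; lra.
have dimU : \dim U = (p * q)%N.
  rewrite limg_dim_eq ?dimvf ?dim_matrix //.
  rewrite capfv; apply/eqP/lker0P => C1 C2 h.
  apply/eqP; rewrite -subr_eq0; apply/eqP.
  have : Phi (C1 - C2) = 0 by rewrite linearB; apply/eqP; rewrite subr_eq0; apply/eqP; exact: h.
  rewrite PhiE => /(mul_inj (fun a => @vbasis_inj R m W a)) h0.
  have : (C1 - C2)^T *m X = 0 by rewrite -[X in _ *m X]trmxK -trmx_mul h0 trmx0.
  move=> /(mul_inj (fun a => @vbasis_inj R n V a)) h1.
  by rewrite -[C1 - C2]trmxK h1 trmx0.
have eqU : <<sJ>>%VS = U by apply/eqP; rewrite eqEsubv sJU UsJ.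
have p0 : (0 < p)%N.
  rewrite lt0n dimv_eq0; apply/negP => /eqP V0.
  have := FsF xF FxF; rewrite -/V V0 memv0 => /eqP x0.
  by move: (Fsph _ FxF); rewrite x0 (N0 hNX) => /eqP; rewrite eq_sym oner_eq0.
have q0 : (0 < q)%N.
  rewrite lt0n dimv_eq0; apply/negP => /eqP W0.
  have := GsG g0 Gg0; rewrite -/W W0 memv0 => /eqP g00.
  by move: (proj2 Gg0); rewrite g00 dot0l => /eqP; rewrite eq_sym oner_eq0.
exists p, q; split.
- by rewrite p0 /= /p; have := dimvS (subvf V); rewrite dimvf dim_matrix mul1r.
- by rewrite q0 /= /q; have := dimvS (subvf W); rewrite dimvf dim_matrix mul1r.
- by rewrite -dimJ eqU dimU.
Qed.
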